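(* Let $A \in \mathbb{R}^{m \times r}$, $b \in \mathbb{R}^m$, and $P = \{ x \in \mathbb{R}^r \mid Ax \ge b\}$. Then $P$ has only finitely many convex-conformally non-decomposable vectors.
   Context: For $x \in \mathbb{R}^n$, $\operatorname{sign}(x) \in \{-,0,+\}^n$ is obtained by applying the sign function componentwise; the relations $0<-$, $0<+$ induce a componentwise partial order on $\{-,0,+\}^n$. A vector $x \in P$ is convex-conformally non-decomposable if for all $x^1,x^2 \in P$ with $\operatorname{sign}(x^1),\operatorname{sign}(x^2) \le \operatorname{sign}(x)$ and all $0<\lambda<1$, $x = \lambda x^1 + (1-\lambda)x^2$ implies $x^1 = x^2$. *)

(* Defs.v *)
From mathcomp Require Import all_boot all_order all_algebra.
From mathcomp Require Import reals.
Set Implicit Arguments. Unset Strict Implicit. Unset Printing Implicit Defensive.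
Import Order.TTheory GRing.Theory Num.Theory.
Local Open Scope ring_scope.

Definition polyhedron (R : realType) (m r : nat)
  (A : 'M[R]_(m, r)) (b : 'cV[R]_m) : pred 'cV[R]_r :=
  fun x => [forall i, b i 0 <= (A *m x) i 0].

Definition sign_le (R : realType) (r : nat) (y x : 'cV[R]_r) : Prop :=
  forall i, Num.sg (y i 0) = 0 \/ Num.sg (y i 0) = Num.sg (x i 0).

Definition ccnd (R : realType) (r : nat) (P : pred 'cV[R]_r) (x : 'cV[R]_r)
  : Prop :=
  P x /\
  forall (x1 x2 : 'cV[R]_r) (lam : R),
    P x1 -> P x2 -> sign_le x1 x -> sign_le x2 x ->
    0 < lam -> lam < 1 ->
    x = lam *: x1 + (1 - lam) *: x2 -> x1 = x2.

(* Main.v *)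
Require Import Defs.
From mathcomp Require Import all_boot all_order all_algebra.
From mathcomp Require Import reals.
From mathcomp Require Import ring lra.
From Stdlib Require Import Classical.
Import Order.TTheory GRing.Theory Num.Theory.
Local Open Scope ring_scope.

Lemma exists_eps (R : realType) (T : finType) (P : pred T) (a s : T -> R) :
  (forall t, P t -> 0 < s t) ->
  exists2 e, 0 < e & forall t, P t -> e * `|a t| < s t.
Proof.
move=> Hs.
suff H : forall l : seq T, exists2 e, 0 < e &
   forall t, t \in l -> P t -> e * `|a t| < s t.
  by have [e ep He] := H (enum T); exists e => // t Pt; apply: He; rewrite ?mem_enum.
elim=> [|u l [e ep He]]; first by exists 1.
case Pu: (P u); last first.
  exists e => // t; rewrite inE => /orP [/eqP -> | tl]; first by rewrite Pu.
  exact: He.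
have su := Hs u Pu.
have a0 : 0 <= `|a u| by [].
have n0 : `|a u| + 1 != 0 by rewrite gt_eqF // ltr_wpDl.
set c := s u / (`|a u| + 1).
have cp : 0 < c by rewrite divr_gt0 // ltr_wpDl.
have cE : c * (`|a u| + 1) = s u by rewrite /c divfK.
have [e' [e'p [E1 E2]]] : exists e', 0 < e' /\ e' <= e /\ e' <= c.
  by case: (leP e c) => h; [exists e | exists c]; split => //; split => //; lra.
exists e' => // t; rewrite inE => /orP [/eqP -> | tl] Pt.
  have h : e' * `|a u| <= c * `|a u| by rewrite ler_wpM2r.
  nra.
have := He t tl Pt.
have h : e' * `|a t| <= e * `|a t| by rewrite ler_wpM2r.
lra.
Qed.

Lemma sg_pert (R : realType) (a e : R) : `|e| < `|a| -> Num.sg (a + e) = Num.sg a.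
Proof.
move=> h.
have h1 : - e <= `|e| by rewrite -normrN ler_norm. have h2 := ler_norm e.
case: (ltgtP a 0) => ha.
- have ha' : `|a| = - a by rewrite ltr0_norm.
  rewrite !ltr0_sg //; lra.
- have ha' : `|a| = a by rewrite gtr0_norm.
  rewrite !gtr0_sg //; lra.
- move: h; rewrite ha normr0. have := normr_ge0 e. lra.
Qed.

Lemma ccnd_unique (R : realType) (m r : nat) (A : 'M[R]_(m, r)) (b : 'cV[R]_m)
  (x y : 'cV[R]_r) :
  ccnd (polyhedron A b) x ->
  (forall j, (x j 0 == 0) = (y j 0 == 0)) ->
  (forall i, ((A *m x) i 0 == b i 0) = ((A *m y) i 0 == b i 0)) -> y = x.
Proof.
move=> [Px Hx] Hz Ht.
set d := y - x.
have [e1 e1p He1] := @exists_eps _ _ (fun j : 'I_r => x j 0 != 0)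
   (fun j => d j 0) (fun j => `|x j 0|) (fun j h => ltac:(by rewrite normr_gt0)).
have pos2 : forall i : 'I_m, (A *m x) i 0 != b i 0 -> 0 < (A *m x) i 0 - b i 0.
  move=> i hi; rewrite subr_gt0 lt_neqAle eq_sym hi /=.
  exact: (forallP Px i).
have [e2 e2p He2] := @exists_eps _ _ (fun i : 'I_m => (A *m x) i 0 != b i 0)
   (fun i => (A *m d) i 0) (fun i => (A *m x) i 0 - b i 0) pos2.
have [e [ep [E1 E2]]] : exists e, 0 < e /\ e <= e1 /\ e <= e2.
  by case: (leP e1 e2) => h; [exists e1 | exists e2]; split => //; split => //; lra.
have key : forall t, `|t| <= e ->
    polyhedron A b (x + t *: d) /\ sign_le (x + t *: d) x.
  move=> t Ht'; split.
    apply/forallP => i; rewrite mulmxDr -scalemxAr mxE [X in _ + X]mxE.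
    case: (eqVneq ((A *m x) i 0) (b i 0)) => hi.
      have /eqP hy : (A *m y) i 0 == b i 0 by rewrite -Ht hi eqxx.
      have -> : (A *m d) i 0 = 0 by rewrite /d mulmxBr mxE [X in _ + X]mxE hy hi subrr.
      by rewrite mulr0 addr0 hi.
    have := He2 i hi.
    have : - (t * (A *m d) i 0) <= `|t| * `|(A *m d) i 0|.
      by rewrite -normrM -normrN ler_norm.
    have : `|t| * `|(A *m d) i 0| <= e2 * `|(A *m d) i 0|.
      by rewrite ler_wpM2r //; lra.
    lra.
  move=> j; rewrite !mxE.
  case: (eqVneq (x j 0) 0) => hj.
    have /eqP hy : y j 0 == 0 by rewrite -Hz hj.
    left; rewrite hy hj subrr mulr0 addr0 sgr0 //.
  right; apply: sg_pert.
  have := He1 j hj; rewrite normrM /d !mxE.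
  have : `|t| * `|y j 0 - x j 0| <= e1 * `|y j 0 - x j 0| by rewrite ler_wpM2r //; lra.
  lra.
have [P1 S1] := key e (ltac:(rewrite gtr0_norm //)).
have [P2 S2] := key (- e) (ltac:(rewrite normrN gtr0_norm //)).
have hE : x = (1/2) *: (x + e *: d) + (1 - 1/2) *: (x + (- e) *: d).
  by apply/matrixP => i j; rewrite !mxE; field.
have eq := Hx _ _ (1/2) P1 P2 S1 S2 ltac:(lra) ltac:(lra) hE.
have d0 : d = 0.
  apply/matrixP => i j; have := congr1 (fun M : 'cV[R]_r => M i j) eq.
  rewrite /d !mxE => h; nra.
by apply/eqP; rewrite -subr_eq0; apply/eqP.
Qed.

Theorem proposition5 (R : realType) (m r : nat)
  (A : 'M[R]_(m, r)) (b : 'cV[R]_m) :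
  exists s : seq 'cV[R]_r,
    forall x : 'cV[R]_r, ccnd (polyhedron A b) x -> x \in s.
Proof.
pose key (x : 'cV[R]_r) : {set 'I_r} * {set 'I_m} :=
  ([set j | x j 0 == 0], [set i | (A *m x) i 0 == b i 0]).
suff H : forall ks : seq ({set 'I_r} * {set 'I_m}), exists s : seq 'cV[R]_r,
    forall x, ccnd (polyhedron A b) x -> key x \in ks -> x \in s.
  have [s Hs] := H (enum {: {set 'I_r} * {set 'I_m}}).
  by exists s => x cx; apply: Hs => //; rewrite mem_enum.
elim=> [|k ks [s Hs]]; first by exists [::].
case: (classic (exists x, ccnd (polyhedron A b) x /\ key x = k)) => [[x0 [c0 k0]] | nex].
  exists (x0 :: s) => x cx; rewrite inE => /orP [/eqP kx | kin]; last by rewrite inE Hs ?orbT.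
  rewrite inE; apply/orP; left; apply/eqP.
  rewrite -k0 in kx.
  apply: (@ccnd_unique _ _ _ A b x0 x c0) => [j | i].
    by have := congr1 fst kx => /setP/(_ j); rewrite !inE => ->.
  by have := congr1 snd kx => /setP/(_ i); rewrite !inE => ->.
exists s => x cx; rewrite inE => /orP [/eqP kx|]; last exact: Hs.
by exfalso; apply: nex; exists x.
Qed.
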